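(* Let $M=(N,X,f,p)$ be a mechanism and $\hat M=(N,\hat X,\hat f,\hat p)$ a simplification of $M$ that satisfies outcome reducibility. Then $\hat M$ is total with respect to Nash equilibria: for every type profile $\theta$ and every Nash equilibrium $x$ of $M$ for $\theta$, there is a Nash equilibrium of $\hat M$ for $\theta$ yielding the same outcome and the same payments as $x$.
   Context: A mechanism $(N,X,f,p)$: agents $N=\{1,\dots,n\}$ with types $\theta_i\in\Theta_i$ and valuations $v_i:\Omega\times\Theta_i\to\mathbb{R}$ over outcomes $\Omega$; message sets $X=\prod_i X_i$, social choice function $f:X\to\Omega$, payment function $p:X\to\mathbb{R}^n$; utility $u_i(x,\theta_i)=v_i(f(x),\theta_i)-p_i(x)$. A simplification $(N,\hat X,\hat f,\hat p)$ of it has $\hat X=\prod_i\hat X_i$ with $\hat X_i\subseteq X_i$, $\hat f=f|_{\hat X}$, $\hat p=p|_{\hat X}$. For a fixed type profile $\theta$, a message profile $x$ is a Nash equilibrium if no agent $i$ has a message in its message set giving it strictly higher utility against $x_{-i}$. Outcome reducibility: there is a map $h:X\to\hat X$ such that (i) $f(x)=f(h(x))$ and $p(x)=p(h(x))$ for all $x\in X$; and (ii) for every type profile $\theta$, every $i\in N$, every $x\in X$ and every $\hat x'_i\in\hat X_i$ there exists $x'_i\in X_i$ with $u_i((x'_i,x_{-i}),\theta_i)\ge u_i((\hat x'_i,h_{-i}(x)),\theta_i)$, where $h_{-i}(x)$ denotes the components of $h(x)$ other than $i$'s. *)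

(* Defs.v *)
From Stdlib Require Import Reals.
From mathcomp Require Import all_boot.

(* Messages of all agents live in a common universe [Msg]; agent i's message
   set is the subset [X i : Msg -> Prop].  A message profile is [x : 'I_n -> Msg]. *)

Definition profile_in {n : nat} {Msg : Type} (X : 'I_n -> Msg -> Prop)
  (x : 'I_n -> Msg) : Prop := forall i, X i (x i).

Definition upd {n : nat} {Msg : Type} (x : 'I_n -> Msg) (i : 'I_n) (m : Msg)
  : 'I_n -> Msg := fun j => if j == i then m else x j.

Definition utility {n : nat} {Msg Omega : Type} {Theta : 'I_n -> Type}
  (v : forall i, Omega -> Theta i -> R) (f : ('I_n -> Msg) -> Omega)
  (p : ('I_n -> Msg) -> 'I_n -> R) (i : 'I_n) (x : 'I_n -> Msg) (t : Theta i) : R :=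
  Rminus (v i (f x) t) (p x i).

(* Nash equilibrium of the mechanism with message sets X (and f, p restricted
   to the X-profiles) for the type profile theta. *)
Definition NashEq {n : nat} {Msg Omega : Type} {Theta : 'I_n -> Type}
  (v : forall i, Omega -> Theta i -> R) (X : 'I_n -> Msg -> Prop)
  (f : ('I_n -> Msg) -> Omega) (p : ('I_n -> Msg) -> 'I_n -> R)
  (theta : forall i, Theta i) (x : 'I_n -> Msg) : Prop :=
  profile_in X x /\
  forall i m, X i m ->
    ~ Rgt (utility v f p i (upd x i m) (theta i)) (utility v f p i x (theta i)).

Definition outcome_reducible {n : nat} {Msg Omega : Type} {Theta : 'I_n -> Type}
  (v : forall i, Omega -> Theta i -> R) (X Xh : 'I_n -> Msg -> Prop)
  (f : ('I_n -> Msg) -> Omega) (p : ('I_n -> Msg) -> 'I_n -> R) : Prop :=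
  exists h : ('I_n -> Msg) -> ('I_n -> Msg),
    (forall x, profile_in X x -> profile_in Xh (h x)) /\
    (forall x, profile_in X x -> f x = f (h x) /\ forall j, p x j = p (h x) j) /\
    (forall (theta : forall i, Theta i) (i : 'I_n) (x : 'I_n -> Msg) (xh' : Msg),
        profile_in X x -> Xh i xh' ->
        exists x', X i x' /\
          Rge (utility v f p i (upd x i x') (theta i))
              (utility v f p i (upd (h x) i xh') (theta i))).

(* Main.v *)
Require Import Defs.
From Stdlib Require Import Reals Lra.
From mathcomp Require Import all_boot.

Theorem lemma1 (n : nat) (Msg Omega : Type) (Theta : 'I_n -> Type)
  (v : forall i, Omega -> Theta i -> R) (X Xh : 'I_n -> Msg -> Prop)
  (f : ('I_n -> Msg) -> Omega) (p : ('I_n -> Msg) -> 'I_n -> R) :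
  (forall i m, Xh i m -> X i m) ->
  outcome_reducible v X Xh f p ->
  forall (theta : forall i, Theta i) (x : 'I_n -> Msg),
    NashEq v X f p theta x ->
    exists xh, NashEq v Xh f p theta xh /\ f xh = f x /\ forall j, p xh j = p x j.
Proof.
  intros Hsub [h [Hh1 [Hh2 Hh3]]] theta x [Hx HN].
  destruct (Hh2 x Hx) as [Hf Hp].
  exists (h x). split; [split|split].
  - apply Hh1; exact Hx.
  - intros i m Hm Hgt.
    destruct (Hh3 theta i x m Hx Hm) as [x' [Hx' Hge]].
    apply (HN i x' Hx').
    assert (E : utility v f p i (h x) (theta i) = utility v f p i x (theta i)).
    { unfold utility. rewrite -Hf -Hp. reflexivity. }
    rewrite E in Hgt. unfold Rgt in *. lra.
  - symmetry; exact Hf.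
  - intro j; symmetry; apply Hp.
Qed.
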